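(* Let $k:\mathbb{R}\to\mathbb{R}$ be a nonnegative kernel that is symmetric, i.e. $k(-z)=k(z)$ for all $z\in\mathbb{R}$. Let $\epsilon_1,\epsilon_2$ be i.i.d. real random variables with $\epsilon_1 \stackrel{d}{=} -\epsilon_1$, finite second moment, $E(k(\epsilon_1))<\infty$ and $E(|\epsilon_1|^2 k^r(\epsilon_1))<\infty$ for $r=1,2$. Let $m\in\mathbb{R}$ and $Y_i = m+\epsilon_i$, $i=1,2$. For $y\in\mathbb{R}$ put $\mu(y)=E(k(Y_2-y)Y_2)$, $\nu(y)=E(k(Y_2-y))$, assumed $>0$, and $\theta(y)=\mu(y)/\nu(y)$, so that \[ \theta(Y_1)=\frac{E_{Y_2}[k(Y_2-Y_1)Y_2]}{E_{Y_2}[k(Y_2-Y_1)]}, \] where $E_{Y_2}$ denotes integration with respect to the distribution of $Y_2$ only (with $Y_1$ held fixed). Then $\mathrm{Med}\,\theta(Y_1)=m$, and $E\,\theta(Y_1)=m$ whenever $E\,\theta(Y_1)$ exists.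
   Context: $\mathrm{Med}$ denotes the median of a random variable. $\stackrel{d}{=}$ denotes equality in distribution. *)

(* Defs.v *)
From HB Require Import structures.
From mathcomp Require Import all_boot all_order all_algebra.
From mathcomp Require Import all_classical all_reals all_analysis.
Set Implicit Arguments. Unset Strict Implicit. Unset Printing Implicit Defensive.
Import Order.TTheory GRing.Theory Num.Theory.
Local Open Scope classical_set_scope.
Local Open Scope ring_scope.

Section Defs.
Context {d : measure_display} {T : measurableType d} {R : realType}.
Variable P : probability T R.

Definition ident_distr (X Y : T -> R) : Prop :=
  forall A : set R, measurable A -> P (X @^-1` A) = P (Y @^-1` A).

Definition indep2 (X Y : T -> R) : Prop :=
  forall A B : set R, measurable A -> measurable B ->
    P (X @^-1` A `&` Y @^-1` B) = (P (X @^-1` A) * P (Y @^-1` B))%E.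

Definition symmetric_distr (X : T -> R) : Prop :=
  ident_distr X (fun t => - X t).

Definition mu_fun (k : R -> R) (Y : T -> R) (y : R) : \bar R :=
  'E_P[fun t => k (Y t - y) * Y t].
Definition nu_fun (k : R -> R) (Y : T -> R) (y : R) : \bar R :=
  'E_P[fun t => k (Y t - y)].
Definition theta_fun (k : R -> R) (Y : T -> R) (y : R) : R :=
  fine (mu_fun k Y y) / fine (nu_fun k Y y).

Definition is_median (X : T -> R) (c : R) : Prop :=
  ((1/2)%:E <= P [set t | (X t <= c)%R])%E /\ ((1/2)%:E <= P [set t | (c <= X t)%R])%E.
End Defs.

(* Main.v *)
Require Import Defs.
From HB Require Import structures.
From mathcomp Require Import all_boot all_order all_algebra.
From mathcomp Require Import all_classical all_reals all_analysis.
From mathcomp Require Import measurable_realfun.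
From mathcomp Require Import ring lra.
Import Order.TTheory GRing.Theory Num.Theory.
Import numFieldNormedType.Exports.
Local Open Scope classical_set_scope.
Local Open Scope ring_scope.

Lemma measurable_inv (R : realType) : measurable_fun [set: R] (@GRing.inv R).
Proof.
have -> : [set: R] = [set x | x != 0] `|` [set 0].
  by apply/seteqP; split => x // _; case: (eqVneq x 0) => [->|h]; [right|left].
have mD : measurable [set x : R | x != 0].
  apply: open_measurable; exact: open_neq.
apply/(measurable_funU _ mD (measurable_set1 _)); split; last exact: measurable_fun_set1.
apply: open_continuous_measurable_fun; first exact: open_neq.
by move=> x; rewrite inE /= => x0; exact: inv_continuous.
Qed.
Local Open Scope ring_scope.

Lemma ge0_int_ident {d} {T : measurableType d} {R : realType} (P : probability T R)
  {X Y : T -> R} : measurable_fun setT X -> measurable_fun setT Y ->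
  ident_distr P X Y -> forall g : R -> \bar R, measurable_fun setT g ->
  (forall x, 0 <= g x)%E ->
  (\int[P]_t g (X t) = \int[P]_t g (Y t))%E.
Proof.
move=> mX mY hid g mg g0.
have E1 : forall Z : T -> R, measurable_fun setT Z ->
    (\int[P]_t g (Z t) = \int[pushforward P Z]_y g y)%E.
  move=> Z mZ; rewrite ge0_integral_pushforward //.
rewrite (E1 _ mX) (E1 _ mY); apply: eq_measure_integral => A mA _.
  exact: hid.  
Qed.

Lemma int_ident {d} {T : measurableType d} {R : realType} (P : probability T R)
  {X Y : T -> R} : measurable_fun setT X -> measurable_fun setT Y ->
  ident_distr P X Y -> forall h : R -> \bar R, measurable_fun setT h ->
  (\int[P]_t h (X t) = \int[P]_t h (Y t))%E.
Proof.
move=> mX mY hid h mh.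
rewrite integralE [in RHS]integralE.
congr (_ - _)%E.
- have H := ge0_int_ident P mX mY hid (h^\+)%E (measurable_funepos mh) (fun x => funepos_ge0 h x).
  rewrite (_ : (fun x0 => h (X x0))^\+ = h^\+ \o X)%E; last exact: funepos_comp.
  rewrite (_ : (fun x0 => h (Y x0))^\+ = h^\+ \o Y)%E; last exact: funepos_comp.
  exact: H.
- have H := ge0_int_ident P mX mY hid (h^\-)%E (measurable_funeneg mh) (fun x => funeneg_ge0 h x).
  rewrite (_ : (fun x0 => h (X x0))^\- = h^\- \o X)%E; last exact: funeneg_comp.
  rewrite (_ : (fun x0 => h (Y x0))^\- = h^\- \o Y)%E; last exact: funeneg_comp.
  exact: H.
Qed.

Lemma fin_integrable {d} {T : measurableType d} {R : realType} (P : probability T R)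
  (f : T -> R) : measurable_fun setT f ->
  (\int[P]_t (f t)%:E)%E \is a fin_num -> P.-integrable setT (EFin \o f).
Proof.
move=> mf hf; have mEf : measurable_fun setT (EFin \o f) by exact/measurable_EFinP.
apply/integrableP; split => //.
move: hf; rewrite integralE fin_numB => /andP[h1 h2].
have -> : (\int[P]_x `|(EFin \o f) x|)%E = (\int[P]_x ((EFin \o f)^\+ \+ (EFin \o f)^\-) x)%E.
  by rewrite -fune_abse.
rewrite ge0_integralD //; last 2 first.
- exact: measurable_funepos.
- exact: measurable_funeneg.
by rewrite lte_add_pinfty // ltey_eq ?h1 ?h2.
Qed.

Lemma measurable_param {d} {T : measurableType d} {R : realType} (P : probability T R)
  (F : R -> T -> R) : measurable_fun setT (fun p : R * T => F p.1 p.2) ->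
  measurable_fun setT (fun y => \int[P]_t (F y t)%:E)%E.
Proof.
move=> mF.
pose G : R * T -> \bar R := fun p => (F p.1 p.2)%:E.
have mG : measurable_fun setT G by exact/measurable_EFinP.
have -> : (fun y => \int[P]_t (F y t)%:E)%E =
    (fun y => fubini_F P (G^\+)%E y - fubini_F P (G^\-)%E y)%E.
  apply/funext => y; rewrite integralE /fubini_F.
  by congr (_ - _)%E; apply: eq_integral => t _; rewrite ?funeposE ?funenegE.
apply: emeasurable_funB.
- apply: (measurable_fun_fubini_tonelli_F (m2 := P)); first exact: measurable_funepos.
  by move=> x; exact: funepos_ge0.
- apply: (measurable_fun_fubini_tonelli_F (m2 := P)); first exact: measurable_funeneg.
  by move=> x; exact: funeneg_ge0.
Qed.

Local Open Scope ereal_scope.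

Theorem theorem1 (d : measure_display) (T : measurableType d) (R : realType)
  (P : probability T R) (k : R -> R) (e1 e2 : T -> R) (m : R) :
  measurable_fun setT k ->
  (forall z, (0 <= k z)%R) ->
  (forall z, k (- z)%R = k z) ->
  measurable_fun setT e1 -> measurable_fun setT e2 ->
  ident_distr P e1 e2 -> indep2 P e1 e2 ->
  symmetric_distr P e1 ->
  P.-integrable setT (fun t => (e1 t ^+ 2)%R%:E) ->
  'E_P[fun t => k (e1 t)] < +oo ->
  'E_P[fun t => (`|e1 t| ^+ 2 * k (e1 t))%R] < +oo ->
  'E_P[fun t => (`|e1 t| ^+ 2 * k (e1 t) ^+ 2)%R] < +oo ->
  let Y1 := fun t => (m + e1 t)%R in
  let Y2 := fun t => (m + e2 t)%R in
  (forall y, mu_fun P k Y2 y \is a fin_num) ->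
  (forall y, nu_fun P k Y2 y \is a fin_num) ->
  (forall y, 0 < nu_fun P k Y2 y) ->
  is_median P (fun t => theta_fun P k Y2 (Y1 t)) m /\
  (P.-integrable setT (fun t => (theta_fun P k Y2 (Y1 t))%:E) ->
     'E_P[fun t => theta_fun P k Y2 (Y1 t)] = m%:E).
Proof.
move=> mk k0 ksym me1 me2 hid hind hsym _ _ _ _ Y1 Y2 mufin nufin nupos.
pose a y := fine (mu_fun P k Y2 y).
pose b y := fine (nu_fun P k Y2 y).
have muE y : mu_fun P k Y2 y = (a y)%:E by rewrite fineK.
have nuE y : nu_fun P k Y2 y = (b y)%:E by rewrite fineK.
have b0 y : (0 < b y)%R by rewrite -lte_fin -nuE.
have thE y : theta_fun P k Y2 y = (a y / b y)%R by [].
have mN : forall A : set R, measurable A -> measurable [set x : R | A (- x)%R].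
  move=> A mA; have := @oppr_measurable R setT measurableT _ mA.
  by rewrite setTI.
have mNe1 : measurable_fun setT (fun t => - e1 t)%R.
  exact: (measurableT_comp (@oppr_measurable R setT) me1).
have mNe2 : measurable_fun setT (fun t => - e2 t)%R.
  exact: (measurableT_comp (@oppr_measurable R setT) me2).
have hid2 : ident_distr P e2 (fun t => - e2 t)%R.
  move=> A mA; rewrite -hid // hsym //.
  exact: (hid _ (mN A mA)).
have mkc : forall c : R, measurable_fun setT (fun z : R => k (m + z - c)%R).
  move=> c; apply: measurableT_comp mk _.
  apply: measurable_funB => //; apply: measurable_funD => //.
have nuS y : b (2 * m - y)%R = b y.
  rewrite /b /nu_fun expectation.unlock /Y2; congr fine.
  pose h := fun z => (k (m + z - (2 * m - y))%R)%:E.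
  transitivity (\int[P]_w h (e2 w))%E; first by [].
  rewrite (int_ident P me2 mNe2 hid2 h); last exact/measurable_EFinP.
  apply: eq_integral => t _ /=; rewrite -ksym; congr (k _)%:E; ring.
have iK y : P.-integrable setT (EFin \o (fun t => k (m + e2 t - y)%R)).
  apply: fin_integrable; first exact: (measurableT_comp (mkc y) me2).
  by have := nufin y; rewrite /nu_fun expectation.unlock.
have iKY y : P.-integrable setT (EFin \o (fun t => k (m + e2 t - y) * (m + e2 t))%R).
  apply: fin_integrable.
    apply: measurable_funM; first exact: (measurableT_comp (mkc y) me2).
    exact: measurable_funD.
  by have := mufin y; rewrite /mu_fun expectation.unlock.
have muS y : a (2 * m - y)%R = (2 * m * b y - a y)%R.
  have : mu_fun P k Y2 (2 * m - y)%R = ((2 * m)%:E * nu_fun P k Y2 y - mu_fun P k Y2 y)%E.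
    rewrite /mu_fun /nu_fun expectation.unlock /Y2.
    pose h := fun z => (k (m + z - (2 * m - y)) * (m + z))%R%:E.
    transitivity (\int[P]_w h (e2 w))%E; first by [].
    rewrite (int_ident P me2 mNe2 hid2 h); last first.
      apply/measurable_EFinP; apply: measurable_funM; first exact: mkc.
      exact: measurable_funD.
    transitivity (\int[P]_w (((fun t => 2 * m * k (m + e2 t - y))%R w)%:E
                        - ((fun t => k (m + e2 t - y) * (m + e2 t))%R w)%:E))%E.
      apply: eq_integral => t _ /=; rewrite -EFinB -ksym; congr (_)%:E.
      have -> : (m - e2 t - (2 * m - y) = - (m + e2 t - y))%R by ring.
      ring.
    rewrite integralB_EFin //; last first.
      have := integrableZl measurableT (2 * m)%R (iK y).
      apply: eq_integrable => // t _ /=; by rewrite -EFinM.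
    congr (_ - _)%E.
    rewrite -(integralZl measurableT (iK y)); apply: eq_integral => t _ /=; by rewrite EFinM.
  rewrite !muE nuE -EFinM -EFinB => -[->]; ring.
have thS y : theta_fun P k Y2 (2 * m - y)%R = (2 * m - theta_fun P k Y2 y)%R.
  rewrite !thE muS nuS; have := b0 y; move=> /lt0r_neq0 hb; by field.
have ma : measurable_fun setT a.
  have -> : a = fine \o (fun y => \int[P]_t ((fun z t => k (m + e2 t - z) * (m + e2 t)) y t)%R%:E)%E.
    by apply/funext => w0; rewrite /a /mu_fun expectation.unlock.
  apply: measurableT_comp; first exact: fine_measurable.
  apply: measurable_param => /=.
  apply: measurable_funM.
    apply: (measurableT_comp mk); apply: measurable_funB; last exact: measurable_fst.
    apply: measurable_funD => //; exact: (measurableT_comp me2 measurable_snd).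
  apply: measurable_funD => //; exact: (measurableT_comp me2 measurable_snd).
have mb : measurable_fun setT b.
  have -> : b = fine \o (fun y => \int[P]_t ((fun z t => k (m + e2 t - z)) y t)%R%:E)%E.
    by apply/funext => w0; rewrite /b /nu_fun expectation.unlock.
  apply: measurableT_comp; first exact: fine_measurable.
  apply: measurable_param => /=.
  apply: (measurableT_comp mk); apply: measurable_funB; last exact: measurable_fst.
  apply: measurable_funD => //; exact: (measurableT_comp me2 measurable_snd).
have mth : measurable_fun setT (theta_fun P k Y2).
  have -> : theta_fun P k Y2 = (fun y => a y * (b y)^-1)%R by apply/funext => w0.
  apply: measurable_funM => //; exact: (measurableT_comp (@measurable_inv R) mb).
pose Z t := theta_fun P k Y2 (Y1 t).
have mY1 : measurable_fun setT Y1 by apply: measurable_funD.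
have mZ : measurable_fun setT Z := measurableT_comp mth mY1.
have Zneg t : theta_fun P k Y2 (m + - e1 t)%R = (2 * m - Z t)%R.
  by rewrite -thS /Z /Y1; congr theta_fun; ring.
have mpsi : measurable_fun setT (fun u => theta_fun P k Y2 (m + u)%R).
  by apply: (measurableT_comp mth); apply: measurable_funD.
have mleS : measurable [set u | (theta_fun P k Y2 (m + u) <= m)%R].
  rewrite (_ : [set u | _] = (fun u => theta_fun P k Y2 (m + u)%R) @^-1` `]-oo, m]).
    by rewrite -(setTI (_ @^-1` _)); exact: mpsi.
  by apply/seteqP; split => u /=; rewrite in_itv.
have mle : measurable [set t | (Z t <= m)%R].
  rewrite (_ : [set t | _] = Z @^-1` `]-oo, m]).
    by rewrite -(setTI (_ @^-1` _)); exact: mZ.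
  by apply/seteqP; split => u /=; rewrite in_itv.
have mge : measurable [set t | (m <= Z t)%R].
  rewrite (_ : [set t | _] = Z @^-1` `[m, +oo[).
    by rewrite -(setTI (_ @^-1` _)); exact: mZ.
  by apply/seteqP; split => u /=; rewrite in_itv /= andbT.
have Peq : P [set t | (Z t <= m)%R] = P [set t | (m <= Z t)%R].
  have -> : [set t | (Z t <= m)%R] = e1 @^-1` [set u | (theta_fun P k Y2 (m + u) <= m)%R] by [].
  rewrite hsym //; congr (P _); apply/seteqP; split => t /=; rewrite Zneg => h; lra.
have Psum : 1 <= P [set t | (Z t <= m)%R] + P [set t | (Z t <= m)%R].
  rewrite -(probability_setT P) [X in _ + X]Peq.
  have -> : [set: T] = [set t | (Z t <= m)%R] `|` [set t | (m <= Z t)%R].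
    apply/seteqP; split => t // _ /=; case: (lerP (Z t) m) => h; [left|right] => //.
    exact: ltW.
  exact: measureU2.
have pfin : P [set t | (Z t <= m)%R] \is a fin_num.
  rewrite ge0_fin_numE ?measure_ge0 //.
  exact: (le_lt_trans (probability_le1 P mle) (ltry 1)).
split.
  rewrite /is_median -/Z -Peq; move: Psum; rewrite -(fineK pfin) -EFinD !lee_fin.
  move=> h; split; lra.
move=> hint; rewrite expectation.unlock.
have Efin := integrable_fin_num measurableT hint.
have : (\int[P]_t (theta_fun P k Y2 (Y1 t))%:E = (2 * m)%:E - \int[P]_t (theta_fun P k Y2 (Y1 t))%:E)%E.
  pose h := fun u => (theta_fun P k Y2 (m + u))%:E.
  have mh : measurable_fun setT h by exact/measurable_EFinP.
  have I1 := int_ident P me1 mNe1 hsym h mh.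
  etransitivity; first exact: I1.
  transitivity (\int[P]_t (((fun _ => 2 * m) t)%:E - (Z t)%:E))%E.
    by apply: eq_integral => t _; rewrite /h Zneg EFinB.
  rewrite integralB_EFin //; last exact: finite_measure_integrable_cst.
  rewrite integral_cst //; congr (_ - _)%E.
  rewrite -[RHS]mule1; congr (_ * _)%E; exact: probability_setT.
move: Efin; set E := (\int[P]_t _)%E => Efin.
rewrite -(fineK Efin) -EFinB => -[h]; congr (_%:E); lra.
Qed.
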